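(* Let $T \in \mathbb{R}^{n_1} \otimes \mathbb{R}^{n_2} \otimes \mathbb{R}^{n_3}$ be a tensor with $Q(T) \geq r$. Then there exist linear maps $\pi_2 : \mathbb{R}^{n_2} \to \mathbb{R}^r$ and $\pi_3 : \mathbb{R}^{n_3} \to \mathbb{R}^r$ such that the slices $\tilde T_1,\ldots,\tilde T_{n_1} \in \mathbb{R}^r \otimes \mathbb{R}^r$ of $(\mathrm{id} \otimes \pi_2 \otimes \pi_3)T$ along the first axis satisfy \[ \#\big( \mathbb{P}\langle \tilde T_1,\ldots,\tilde T_{n_1}\rangle \cap \Sigma_{r,r} \big) \geq r. \]
   Context: For $r \geq 0$ let $I_r := \sum_{j=1}^r e_j \otimes e_j \otimes e_j$. The subrank of $T$ is $Q(T) := \max\{ r \mid \exists\ \mathbb{R}\text{-linear } \varphi_i : \mathbb{R}^{n_i} \to \mathbb{R}^r,\ (\varphi_1 \otimes \varphi_2 \otimes \varphi_3) T = I_r\}$. The slices of $S \in \mathbb{R}^{n_1}\otimes\mathbb{R}^{a}\otimes\mathbb{R}^{b}$ along the first axis are the $S_1,\ldots,S_{n_1}\in \mathbb{R}^a\otimes\mathbb{R}^b$ with $S = \sum_i e_i \otimes S_i$. $\mathbb{P}\langle \cdot \rangle$ denotes the projectivization of the real linear span, and $\Sigma_{r,r} := \{[A] \in \mathbb{P}(\mathbb{R}^r \otimes \mathbb{R}^r) \mid A \text{ has rank } 1\}$ is the real Segre variety of rank-one $r\times r$ matrices; $\#$ denotes cardinality. *)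

(* Defs.v *)
From HB Require Import structures.
From mathcomp Require Import all_boot all_order all_algebra.
From mathcomp Require Import reals.
Set Implicit Arguments. Unset Strict Implicit. Unset Printing Implicit Defensive.
Import Order.TTheory GRing.Theory Num.Theory.
Local Open Scope ring_scope.

Definition tensor (R : Type) (n1 n2 n3 : nat) := 'I_n1 -> 'I_n2 -> 'I_n3 -> R.

Definition tmap3 (R : pzRingType) (n1 n2 n3 m1 m2 m3 : nat)
  (A1 : 'M[R]_(m1, n1)) (A2 : 'M[R]_(m2, n2)) (A3 : 'M[R]_(m3, n3))
  (T : tensor R n1 n2 n3) : tensor R m1 m2 m3 :=
  fun a b c => \sum_(i < n1) \sum_(j < n2) \sum_(k < n3)
                 A1 a i * A2 b j * A3 c k * T i j k.

Definition unit_tensor (R : pzRingType) (r : nat) : tensor R r r r :=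
  fun a b c => ((a == b) && (b == c))%:R.

(* r belongs to the set whose max is the subrank:
   exist linear phi_i with (phi1 (x) phi2 (x) phi3) T = I_r. *)
Definition restricts_to_unit (R : pzRingType) (n1 n2 n3 : nat)
  (T : tensor R n1 n2 n3) (r : nat) : Prop :=
  exists (A1 : 'M[R]_(r, n1)) (A2 : 'M[R]_(r, n2)) (A3 : 'M[R]_(r, n3)),
    forall a b c, tmap3 A1 A2 A3 T a b c = @unit_tensor R r a b c.

(* Q(T) >= r, where Q(T) is the maximum of the (nonempty, bounded) set
   above: some element r' of that set satisfies r <= r'. *)
Definition subrank_ge (R : pzRingType) (n1 n2 n3 : nat)
  (T : tensor R n1 n2 n3) (r : nat) : Prop :=
  exists r' : nat, (r <= r')%N /\ restricts_to_unit T r'.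

Definition slice1 (R : Type) (n1 n2 n3 : nat) (T : tensor R n1 n2 n3)
  (i : 'I_n1) : 'M[R]_(n2, n3) := \matrix_(j, k) T i j k.

(* Matrix whose row space is the linear span <S_1, ..., S_n> (vectorized). *)
Definition span_mx (R : fieldType) (n a b : nat) (S : 'I_n -> 'M[R]_(a, b))
  : 'M[R]_(n, a * b) := \matrix_(i < n) mxvec (S i).

(* #( P<S_1,...,S_n> cap Sigma_{a,b} ) >= k : there are k pairwise distinct
   projective points [P_1], ..., [P_k] (i.e. pairwise non-proportional
   nonzero matrices) each lying in the span and of rank one. *)
Definition proj_rank_one_count_ge (R : fieldType) (n a b : nat)
  (S : 'I_n -> 'M[R]_(a, b)) (k : nat) : Prop :=
  exists P : 'I_k -> 'M[R]_(a, b),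
    (forall i, (mxvec (P i) <= span_mx S)%MS /\ \rank (P i) = 1%N) /\
    (forall i j, i != j -> forall c : R, P i != c *: P j).

(* Main.v *)
Require Import Defs.
From HB Require Import structures.
From mathcomp Require Import all_boot all_order all_algebra.
From mathcomp Require Import reals.
Local Open Scope ring_scope.
Import GRing.Theory.

Theorem lemma4p8 (R : realType) (n1 n2 n3 : nat) (T : tensor R n1 n2 n3)
  (r : nat) :
  subrank_ge T r ->
  exists (pi2 : 'M[R]_(r, n2)) (pi3 : 'M[R]_(r, n3)),
    proj_rank_one_count_ge
      (slice1 (tmap3 (1%:M : 'M[R]_n1) pi2 pi3 T)) r.
Proof.
move=> [r' [Hr [A1 [A2 [A3 H]]]]].
pose w := widen_ord Hr.
exists (\matrix_(j, j') A2 (w j) j'), (\matrix_(k, k') A3 (w k) k').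
set S := slice1 _.
exists (fun i => delta_mx i i); split; last first.
  move=> i j nij c; apply/negP => /eqP /matrixP /(_ i i).
  rewrite !mxE !eqxx (negbTE nij) /= mulr0 => /eqP; by rewrite oner_eq0.
move=> i; split; last exact: mxrank_delta.
have -> : mxvec (delta_mx i i : 'M[R]_(r, r)) = row (w i) A1 *m span_mx S.
  rewrite mulmx_sum_row.
  under eq_bigr => l _ do rewrite rowK mxE.
  rewrite (_ : \sum_l _ = mxvec (\sum_l A1 (w i) l *: S l)); last first.
    by rewrite linear_sum; apply: eq_bigr => l _; rewrite linearZ.
  congr mxvec; apply/matrixP => j k.
  rewrite summxE.
  under eq_bigr => l _ do rewrite mxE /S /slice1 mxE /tmap3.
  have := H (w i) (w j) (w k).
  rewrite /unit_tensor mxE.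
  have -> : ((w i == w j) && (w j == w k)) = ((j == i) && (k == i)).
    have winj : injective w by move=> x y /(congr1 val) /= Hxy; apply: val_inj.
    rewrite !(inj_eq winj).
    case: (eqVneq j i) => [->|ji]; first by rewrite eq_sym.
    by [].
  move=> <-.
  apply: eq_bigr => l _.
  rewrite [in RHS](bigD1 l) //= [X in _ + X]big1 ?addr0; last first.
    move=> l' nl; rewrite big1 // => j' _; rewrite big1 // => k' _.
    by rewrite !mxE eq_sym (negbTE nl) !mul0r.
  rewrite mxE eqxx mulr1n mulr_sumr; apply: eq_bigr => j' _.
  rewrite mulr_sumr; apply: eq_bigr => k' _.
  by rewrite !mxE mul1r !mulrA.
exact: submxMl.
Qed.
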